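(* Let $R$ be a diagonally convex polyomino with at least three diagonals, let $m$ be the largest index $n$ such that $R$ has a cell on the $n$-th diagonal, and let $Q$ be the set of cells of $R$ not on the $m$-th diagonal. Then exactly one connected component (under edge-adjacency) of $Q$ has cells on at least two diagonals, this component is a diagonally convex polyomino, and every other connected component of $Q$ consists of a single cell lying on the $(m-1)$-th diagonal.
   Context: A cell is a closed unit square $[i,i+1]\times[j,j+1]$ with $i,j\in\mathbb{Z}$; we identify it with $(i,j)$; two cells are edge-adjacent if they share an edge. A polyomino is a finite nonempty set of cells connected under edge-adjacency. The $n$-th diagonal is the set of cells $(i,j)$ with $i+j=n$. A polyomino is diagonally convex if for every $n$ its cells on the $n$-th diagonal are of the form $(i,n-i)$ with $i$ ranging over an interval of integers. The number of diagonals of a polyomino is the number of $n$ for which it has a cell on the $n$-th diagonal. *)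

(* Defs.v *)
From Stdlib Require Import ZArith List Relations.
Open Scope Z_scope.

(* The cell [i,i+1]x[j,j+1] is identified with (i,j). *)
Definition cell : Type := (Z * Z)%type.

Definition cellset : Type := cell -> Prop.

Definition adj (c d : cell) : Prop :=
  Z.abs (fst c - fst d) + Z.abs (snd c - snd d) = 1.

Definition finite_set (S : cellset) : Prop :=
  exists l : list cell, forall c, S c <-> In c l.

Definition adj_in (S : cellset) (c d : cell) : Prop := S c /\ S d /\ adj c d.

Definition connected_in (S : cellset) (c d : cell) : Prop :=
  S c /\ clos_refl_trans cell (adj_in S) c d.

Definition polyomino (S : cellset) : Prop :=
  finite_set S /\ (exists c, S c) /\ (forall c d, S c -> S d -> connected_in S c d).

Definition diag (c : cell) : Z := fst c + snd c.

Definition has_diag (S : cellset) (n : Z) : Prop := exists c, S c /\ diag c = n.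

Definition diag_convex (S : cellset) : Prop :=
  forall n i j k, i <= j <= k -> S (i, n - i) -> S (k, n - k) -> S (j, n - j).

Definition at_least_three_diagonals (S : cellset) : Prop :=
  exists n1 n2 n3, n1 < n2 < n3 /\ has_diag S n1 /\ has_diag S n2 /\ has_diag S n3.

Definition at_least_two_diagonals (S : cellset) : Prop :=
  exists n1 n2, n1 < n2 /\ has_diag S n1 /\ has_diag S n2.

(* The connected component of x in S (meaningful when S x). *)
Definition component (S : cellset) (x : cell) : cellset := fun y => connected_in S x y.

Definition remove_diag (R : cellset) (m : Z) : cellset := fun c => R c /\ diag c <> m.

(* Main.v *)
Require Import Defs.
From Stdlib Require Import ZArith List Relations Lia Classical.
Open Scope Z_scope.

Definition inC (R : cellset) (m : Z) (c : cell) : Prop :=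
  R c /\ (diag c <= m - 2 \/
          (diag c = m - 1 /\ exists w, R w /\ diag w = m - 2 /\ adj c w)).

Lemma adj_sym c d : adj c d -> adj d c.
Proof. destruct c, d; unfold adj; simpl; lia. Qed.

Lemma adj_diag c d : adj c d -> diag d = diag c + 1 \/ diag d = diag c - 1.
Proof. destruct c, d; unfold adj, diag; simpl; lia. Qed.

Lemma rt_closure (S : cellset) (P : cell -> Prop) :
  (forall c d, P c -> adj_in S c d -> P d) ->
  forall a b, clos_refl_trans cell (adj_in S) a b -> P a -> P b.
Proof. intros HP a b H; induction H; eauto. Qed.

Lemma rt_sym (S : cellset) a b :
  clos_refl_trans cell (adj_in S) a b -> clos_refl_trans cell (adj_in S) b a.
Proof.
  intros H; induction H.
  - apply rt_step. destruct H as [? [? ?]]. repeat split; auto. apply adj_sym; auto.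
  - apply rt_refl.
  - eapply rt_trans; eauto.
Qed.

Lemma conn_sym S a b : connected_in S a b -> connected_in S b a.
Proof.
  intros [Ha H]. split.
  - eapply rt_closure with (P := S); eauto. intros c d _ [_ [? _]]; auto.
  - apply rt_sym; auto.
Qed.

Lemma conn_trans S a b c : connected_in S a b -> connected_in S b c -> connected_in S a c.
Proof. intros [Ha H1] [_ H2]. split; auto. eapply rt_trans; eauto. Qed.

Lemma conn_step S a b c : connected_in S a b -> adj_in S b c -> connected_in S a c.
Proof. intros [Ha H1] H2. split; auto. eapply rt_trans; eauto. apply rt_step; auto. Qed.

Lemma conn_in S a b : connected_in S a b -> S b.
Proof. intros H. apply conn_sym in H. apply H. Qed.

Lemma finite_subset : forall l (S : cellset), (forall c, S c -> In c l) -> finite_set S.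
Proof.
  induction l as [|a l IH]; intros S H.
  - exists nil. intros c; split; intros Hc; [apply H in Hc; auto | destruct Hc].
  - destruct (IH (fun c => S c /\ c <> a)) as [l0 Hl0].
    { intros c [Hc Hne]. destruct (H c Hc); auto. congruence. }
    destruct (classic (S a)) as [Sa | nSa].
    + exists (a :: l0). intros c; split.
      * intros Hc. destruct (classic (c = a)); [left; auto | right; apply Hl0; auto].
      * intros [<- | Hc]; auto. apply Hl0 in Hc; tauto.
    + exists l0. intros c; split.
      * intros Hc. apply Hl0. split; auto. intros ->; auto.
      * intros Hc; apply Hl0 in Hc; tauto.
Qed.

Lemma comp_rt S x c d : connected_in S x c -> clos_refl_trans cell (adj_in S) c d ->
  clos_refl_trans cell (adj_in (component S x)) c d.
Proof.
  intros Hc H; revert Hc; induction H; intros Hc.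
  - apply rt_step. split; [exact Hc|]. split; [eapply conn_step; eauto | apply H].
  - apply rt_refl.
  - eapply rt_trans; [apply IHclos_refl_trans1; auto | apply IHclos_refl_trans2].
    apply conn_trans with x0; auto. split; [apply conn_in in Hc; auto | auto].
Qed.

Lemma inC_Q R m c : inC R m c -> remove_diag R m c.
Proof. intros [Hc H]. split; auto. lia. Qed.

Lemma inC_m1 R m c : inC R m c -> diag c = m - 1 ->
  exists wx, R (wx, m - 2 - wx) /\ fst c - 1 <= wx <= fst c.
Proof.
  intros [Hc [H | [_ [[wx wy] [Hw [Hd Ha]]]]]] Hdc; [lia|].
  destruct c as [i ai]; unfold adj, diag in *; simpl in *.
  exists wx. assert (wy = m - 2 - wx) by lia. subst. split; auto. lia.
Qed.

Lemma mk_inC R m i t : R (i, m - 1 - i) -> R (t, m - 2 - t) -> i - 1 <= t <= i ->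
  inC R m (i, m - 1 - i).
Proof.
  intros H1 H2 H3. split; auto. right. split; [unfold diag; simpl; lia|].
  exists (t, m - 2 - t). split; auto. unfold diag, adj; simpl. split; lia.
Qed.

Lemma Lmid R m (Hdc : diag_convex R) i j k : i <= j <= k ->
  inC R m (i, m - 1 - i) -> inC R m (k, m - 1 - k) -> inC R m (j, m - 1 - j).
Proof.
  intros Hijk Hi Hk.
  destruct (inC_m1 _ _ _ Hi) as [wa [Ra Ha]]; [unfold diag; simpl; lia|].
  destruct (inC_m1 _ _ _ Hk) as [wb [Rb Hb]]; [unfold diag; simpl; lia|].
  simpl in *.
  assert (Rj : R (j, m - 1 - j)) by (apply (Hdc (m - 1) i j k); auto; apply Hi || apply Hk).
  destruct (Z_le_gt_dec j wb).
  - apply mk_inC with j; auto; [|lia]. apply (Hdc (m - 2) wa j wb); auto; lia.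
  - apply mk_inC with wb; auto; lia.
Qed.

Lemma L1n R m (Hdc : diag_convex R) : forall n i k, k - i = Z.of_nat n ->
  inC R m (i, m - 1 - i) -> inC R m (k, m - 1 - k) ->
  connected_in (remove_diag R m) (i, m - 1 - i) (k, m - 1 - k).
Proof.
  induction n; intros i k Hn Hi Hk.
  - simpl in Hn. assert (k = i) by lia. subst. split; [apply inC_Q; auto | apply rt_refl].
  - rewrite Nat2Z.inj_succ in Hn.
    assert (Hi' : inC R m (i + 1, m - 1 - (i + 1))) by (apply Lmid with i k; auto; lia).
    destruct (inC_m1 _ _ _ Hi) as [wa [Ra Ha]]; [unfold diag; simpl; lia|].
    destruct (inC_m1 _ _ _ Hk) as [wb [Rb Hb]]; [unfold diag; simpl; lia|].
    simpl in *.
    assert (Rw : R (i, m - 2 - i)) by (apply (Hdc (m - 2) wa i wb); auto; lia).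
    apply conn_trans with (i + 1, m - 1 - (i + 1)); [| apply IHn; auto; lia].
    apply conn_step with (i, m - 2 - i).
    + split; [apply inC_Q; auto|]. apply rt_step. split; [apply inC_Q; auto|].
      split; [split; auto; unfold diag; simpl; lia | unfold adj; simpl; lia].
    + split; [split; auto; unfold diag; simpl; lia|].
      split; [apply inC_Q; auto | unfold adj; simpl; lia].
Qed.

Lemma L1 R m (Hdc : diag_convex R) a b : inC R m a -> inC R m b ->
  diag a = m - 1 -> diag b = m - 1 -> connected_in (remove_diag R m) a b.
Proof.
  destruct a as [i ai], b as [k bk]; unfold diag; simpl; intros Ha Hb Hda Hdb.
  assert (ai = m - 1 - i) by lia. assert (bk = m - 1 - k) by lia. subst.
  destruct (Z.le_ge_cases i k).
  - apply L1n with (Z.to_nat (k - i)); auto. rewrite Z2Nat.id; lia.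
  - apply conn_sym. apply L1n with (Z.to_nat (i - k)); auto. rewrite Z2Nat.id; lia.
Qed.

Lemma isolated R m e : remove_diag R m e -> diag e = m - 1 -> ~ inC R m e ->
  forall z, clos_refl_trans cell (adj_in (remove_diag R m)) e z -> z = e.
Proof.
  intros He Hd HnC z H.
  apply rt_closure with (S := remove_diag R m) (P := fun z => z = e) (a := e); auto.
  intros c d -> [_ [[Rd Hdd] Had]]. exfalso. apply HnC.
  destruct (adj_diag _ _ Had). lia.
  split; [apply He|]. right. split; auto. exists d. repeat split; auto; lia.
Qed.

Theorem mainTheorem3 (R : cellset) (m : Z)
  (HR : polyomino R) (Hdc : diag_convex R) (H3 : at_least_three_diagonals R)
  (Hm : has_diag R m) (Hmax : forall c, R c -> diag c <= m) :
  let Q := remove_diag R m in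
  exists x0, Q x0 /\
    (* the component of x0 has cells on at least two diagonals ... *)
    at_least_two_diagonals (component Q x0) /\
    (* ... and it is the only such component *)
    (forall y, Q y -> at_least_two_diagonals (component Q y) ->
       connected_in Q x0 y) /\
    (* it is a diagonally convex polyomino *)
    polyomino (component Q x0) /\ diag_convex (component Q x0) /\
    (* every other component is a single cell on diagonal m-1 *)
    (forall y, Q y -> ~ connected_in Q x0 y ->
       (forall z, component Q y z -> z = y) /\ diag y = m - 1).
Proof.
  intros Q. unfold Q.
  destruct HR as [[lR HlR] [_ Hconn]].
  assert (Hex : exists x0, inC R m x0 /\ diag x0 = m - 1).
  { apply NNPP; intros Hno.
    destruct H3 as [n1 [n2 [n3 [Hn [[u [Ru Hu]] [_ [u3 [Ru3 Hu3]]]]]]]].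
    pose proof (Hmax _ Ru3).
    destruct Hm as [v [Rv Hv]].
    destruct (Hconn u v Ru Rv) as [_ Hp].
    assert (diag v <= m - 2); [|lia].
    apply rt_closure with (P := fun c => diag c <= m - 2) (a := u) (S := R); auto; [|lia].
    intros c d Hc [Rc [Rd Hcd]]. destruct (adj_diag _ _ Hcd); [|lia].
    destruct (Z_le_gt_dec (diag d) (m - 2)); auto. exfalso. apply Hno.
    exists d. split; [|lia]. split; auto. right. split; [lia|].
    exists c. repeat split; auto; [lia | apply adj_sym; auto]. }
  destruct Hex as [x0 [Cx0 Dx0]].
  assert (Hall : forall c, inC R m c -> connected_in (remove_diag R m) x0 c).
  { intros c Cc. destruct (Hconn x0 c (proj1 Cx0) (proj1 Cc)) as [_ Hp].
    revert Cc. apply rt_closure with (S := R) (a := x0)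
      (P := fun c => inC R m c -> connected_in (remove_diag R m) x0 c); auto.
    - intros a d Ha [Ra [Rd Had]] Cd.
      destruct (classic (inC R m a)) as [Ca | nCa].
      + apply conn_step with a; auto. split; [apply inC_Q; auto|].
        split; [apply inC_Q; auto | auto].
      + pose proof (Hmax _ Ra). destruct (adj_diag _ _ Had).
        * exfalso. apply nCa. split; auto. left. destruct Cd as [_ [? | [? _]]]; lia.
        * assert (diag a <= m - 2 \/ diag a = m - 1 \/ diag a = m) as [Hd|[Hd|Hd]] by lia.
          -- exfalso; apply nCa; split; auto.
          -- exfalso; apply nCa; split; auto. right; split; auto.
             exists d; repeat split; auto. destruct Cd as [_ [? | [? _]]]; lia.
          -- apply L1; auto. lia.
    - intros _. split; [apply inC_Q; auto | apply rt_refl]. }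
  pose proof (inC_Q _ _ _ Cx0) as Qx0.
  assert (HC : forall z, component (remove_diag R m) x0 z -> inC R m z).
  { intros z Hz. pose proof (conn_in _ _ _ Hz) as [Rz Dz].
    pose proof (Hmax _ Rz).
    destruct (Z_le_gt_dec (diag z) (m - 2)). { split; auto. }
    apply NNPP; intros nC.
    assert (x0 = z); [|subst; tauto].
    apply (isolated R m z); auto; [split; auto | lia |].
    apply (conn_sym _ _ _ Hz). }
  exists x0. split; [auto|]. split.
  { destruct Cx0 as [Rx0 [? | [_ [w [Rw [Dw Aw]]]]]]; [lia|].
    exists (m - 2), (m - 1). split; [lia|]. split.
    - exists w. split; auto. apply Hall. split; auto. lia.
    - exists x0. split; auto. apply Hall; split; auto; right; split; auto; exists w; auto. }
  split.
  { intros y Qy [n1 [n2 [Hn [[z1 [Hz1 D1]] [z2 [Hz2 D2]]]]]].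
    pose proof (conn_in _ _ _ Hz1) as [Rz1 Qz1].
    pose proof (conn_in _ _ _ Hz2) as [Rz2 Qz2].
    pose proof (Hmax _ Rz2).
    apply conn_trans with z1; [apply Hall; split; auto; lia | apply conn_sym; auto]. }
  split.
  { split; [|split].
    - apply finite_subset with lR. intros c Hc. apply HlR. apply (conn_in _ _ _ Hc).
    - exists x0. split; auto. apply rt_refl.
    - intros c d Hc Hd. split; auto. apply comp_rt; auto.
      apply conn_trans with x0; [apply conn_sym|]; auto. }
  split.
  { intros n i j k Hijk Hi Hk.
    pose proof (HC _ Hi) as Ci. pose proof (HC _ Hk) as Ck.
    pose proof (Hdc n i j k Hijk (proj1 Ci) (proj1 Ck)) as Rj.
    pose proof (Hmax _ (proj1 Ci)). unfold diag in *; simpl in *.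
    destruct (conn_in _ _ _ Hi) as [_ Dn]. unfold diag in Dn; simpl in Dn.
    destruct (Z_le_gt_dec n (m - 2)).
    - apply Hall. split; auto. left. unfold diag; simpl; lia.
    - assert (n = m - 1) by lia. subst n. apply Hall. apply Lmid with i k; auto. }
  intros y Qy Hny.
  assert (nC : ~ inC R m y) by (intros C; apply Hny, Hall, C).
  destruct Qy as [Ry Dy]. pose proof (Hmax _ Ry).
  assert (Hd : diag y = m - 1).
  { destruct (Z_le_gt_dec (diag y) (m - 2)); [|lia]. exfalso; apply nC; split; auto. }
  split; auto.
  intros z [_ Hz]. apply (isolated R m y); auto. split; auto.
Qed.
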